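(* Let $g$ be a positive integer; suppose that for some $l$ the set $S_l$ contains a consecutive prospective prime pair with gap $g$, and let $j>l+2$. Let $(a,a+g)$ be a consecutive prospective prime pair with gap $g$ in $S_j$, and let $B$ be the set of $m_{j+1}\in\{0,\dots,P_{j+1}-1\}$ such that $b=a+m_{j+1}P_j\#$ and $b+g$ are both coprime to $P_{j+1}\#$. For $m_{j+1}\in B$ with $b=a+m_{j+1}P_j\#$, let $\widehat m(m_{j+1})$ be the unique $\widehat m\in\{0,\dots,P_{j+2}-1\}$ with $P_{j+2}\mid b+\widehat mP_{j+1}\#$, and $\widehat m'(m_{j+1})$ the unique $\widehat m'\in\{0,\dots,P_{j+2}-1\}$ with $P_{j+2}\mid b+g+\widehat m'P_{j+1}\#$ (these index the subsets $S_{j+2}^{(\widehat m)}$, $S_{j+2}^{(\widehat m')}$ of $S_{j+2}$ in which the corresponding lesser, resp. greater, component is disallowed). Then the map $m_{j+1}\mapsto\widehat m(m_{j+1})$ is injective on $B$, and the map $m_{j+1}\mapsto\widehat m'(m_{j+1})$ is injective on $B$.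
   Context: $P_k$ denotes the $k$-th prime ($P_1=2$), $P_k\#=\prod_{i=1}^kP_i$. $S_k=\{N\in\mathbb{N}:5\le N\le4+P_k\#\}$ and $S_k^{(m)}=\{N:5+mP_{k-1}\#\le N\le 4+(m+1)P_{k-1}\#\}$ for $0\le m\le P_k-1$. A prospective prime in $S_k$ is an $N\in S_k$ coprime to $P_k\#$; prospective primes $a<b$ in $S_k$ are consecutive if no integer strictly between them is coprime to $P_k\#$; a consecutive prospective prime pair with gap $g$ is a pair $(a,a+g)$ of consecutive prospective primes. *)

(* Defs.v *)
From mathcomp Require Import all_boot.
Set Implicit Arguments. Unset Strict Implicit. Unset Printing Implicit Defensive.

Definition next_prime (n : nat) : nat :=
  ex_minn (P := fun p => (n < p) && prime p)
    (let: exist2 p H1 H2 := prime_above n in ex_intro _ p (introT andP (conj H1 H2))).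

Fixpoint pr0 (k : nat) : nat :=
  match k with 0 => 2 | k'.+1 => next_prime (pr0 k') end.

(* P k = P_k, the k-th prime with P 1 = 2 (P 0 is a meaningless default) *)
Definition P (k : nat) : nat := pr0 k.-1.

(* primorial k = P_k# = P_1 * ... * P_k  (primorial 0 = 1) *)
Definition primorial (k : nat) : nat := \prod_(i < k) pr0 i.

Definition inS (k N : nat) : bool := (5 <= N) && (N <= 4 + primorial k).

Definition prospective (k N : nat) : bool := inS k N && coprime N (primorial k).

Definition consecutive (k a b : nat) : bool :=
  [&& prospective k a, prospective k b, a < b &
      all (fun n => ~~ coprime n (primorial k)) (iota a.+1 (b - a.+1))].

Definition cpp_pair (k g a : nat) : bool := consecutive k a (a + g).

(* the unique mh in {0..P_{j+2}-1} with P_{j+2} | c + mh * P_{j+1}#  (default 0) *)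
Definition mhat (j c : nat) : nat :=
  odflt 0 (omap (@nat_of_ord _)
    [pick h : 'I_(P j.+2) | P j.+2 %| c + h * primorial j.+1]).

(* Main.v *)
Require Import Defs.
From mathcomp Require Import all_boot.

Lemma next_primeP n : (n < next_prime n) && prime (next_prime n).
Proof. rewrite /next_prime; by case: ex_minnP. Qed.

Lemma pr0_prime k : prime (pr0 k).
Proof. case: k => [|k] //=; by case/andP: (next_primeP (pr0 k)). Qed.

Lemma pr0_lt i k : i < k -> pr0 i < pr0 k.
Proof.
elim: k => [//|k IH]; rewrite ltnS leq_eqVlt => /orP[/eqP->|/IH H] /=.
  by case/andP: (next_primeP (pr0 k)).
apply: ltn_trans H _; by case/andP: (next_primeP (pr0 k)).
Qed.

Lemma coprime_pr0 k k' : k' <= k -> coprime (pr0 k) (primorial k').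
Proof.
elim: k' => [|k' IH] Hk; first by rewrite /primorial big_ord0 coprimen1.
rewrite /primorial big_ord_recr /= coprimeMr; apply/andP; split; first exact: IH (ltnW Hk).
rewrite prime_coprime ?pr0_prime // dvdn_prime2 ?pr0_prime //.
by rewrite eq_sym neq_ltn pr0_lt.
Qed.

Lemma primS k : primorial k.+1 = primorial k * pr0 k.
Proof. by rewrite /primorial big_ord_recr. Qed.

Lemma mhat_inj j c m m' : m < pr0 j -> m' < pr0 j ->
  mhat j (c + m * primorial j) = mhat j (c + m' * primorial j) -> m = m'.
Proof.
set p := pr0 j.+1; set Q := primorial j.
have pp : prime p by exact: pr0_prime.
have p0 : 0 < p by exact: prime_gt0.
have cQ : coprime p Q by apply: coprime_pr0; exact: leqnSn.
have cQq : coprime p (primorial j.+1) by apply: coprime_pr0.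
have ex : forall d, exists h : 'I_p, p %| d + h * primorial j.+1.
  move=> d; case: (Bezoutl (primorial j.+1) p0) => u _.
  rewrite (eqP cQq) => Hu.
  have Hl : d * u %% p < p by rewrite ltn_mod.
  exists (Ordinal Hl) => /=.
  rewrite /dvdn -modnDmr modnMml modnDmr -mulnA -{1}(muln1 d) -mulnDr.
  by rewrite -/(dvdn _ _) dvdn_mull.
have key : forall d, p %| d + mhat j d * primorial j.+1.
  move=> d; rewrite /mhat; case: pickP => [h /= Hh //|none].
  by case: (ex d) => h Hh; move: (none h); rewrite Hh.
have hlt : p < pr0 j -> False by rewrite ltnNge ltnW // pr0_lt.
move=> Hm Hm' E.
have gen : forall x y, x < pr0 j -> y <= x ->
   p %| c + x * Q + mhat j (c + y * Q) * primorial j.+1 ->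
   p %| c + y * Q + mhat j (c + y * Q) * primorial j.+1 -> x = y.
  move=> x y Hx Hyx H1 H2.
  have := dvdn_sub H1 H2.
  rewrite -!addnA subnDl -!(addnC (_ * primorial j.+1)) subnDl -mulnBl.
  rewrite Gauss_dvdl // => H3.
  apply/eqP; rewrite eqn_leq Hyx andbT leqNgt.
  apply/negP => Hlt.
  have Hpos : 0 < x - y by rewrite subn_gt0.
  have := dvdn_leq Hpos H3.
  have : x - y < p.
    apply: leq_ltn_trans (leq_subr _ _) _; apply: ltn_trans Hx _; exact: pr0_lt.
  by rewrite ltnNge => /negbTE ->.
case: (leqP m' m) => H.
  apply: (gen m m' Hm H); last exact: key.
  rewrite -E; exact: key.
symmetry; apply: (gen m' m Hm' (ltnW H)); last exact: key.
rewrite E; exact: key.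
Qed.

Theorem lemma3 (g l j a : nat) :
  0 < g ->
  (exists a0, cpp_pair l g a0) ->
  l + 2 < j ->
  cpp_pair j g a ->
  let B := [pred m : nat | (m < P j.+1) &&
              coprime (a + m * primorial j) (primorial j.+1) &&
              coprime (a + m * primorial j + g) (primorial j.+1)] in
  {in B &, injective (fun m => mhat j (a + m * primorial j))} /\
  {in B &, injective (fun m => mhat j (a + m * primorial j + g))}.
Proof.
move=> _ _ _ _ B; split => m m' /andP[/andP[Hm _] _] /andP[/andP[Hm' _] _] /=.
  exact: mhat_inj.
rewrite -!(addnAC a g); exact: mhat_inj.
Qed.
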